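(* Let $r,R>0$, $N\in\mathbb{N}$, $d\ge N$, and define $f_{N,r}:B_R(0)\to\mathbb{R}$ by $f_{N,r}(x)=\max_{i\in[N]}\{x_i-4r\cdot i\}$. Then: (1) $f_{N,r}$ is an $r$-robust zero-chain; (2) for every $x\in B_R(0)$ with $i_r^+(x)\le N$, $f_{N,r}(x)-\inf_{z\in B_R(0)}f_{N,r}(z)\ge\frac{R}{\sqrt N}-4Nr$; (3) $f_{N,r}$ is convex and $1$-Lipschitz (in the Euclidean norm).
   Context: All norms are Euclidean and $B_\rho(\bar x)=\{x\in\mathbb{R}^d:\|x-\bar x\|_2\le\rho\}$. For $x\in\mathbb{R}^d$, $i_r^+(x)=\min\{i\in[d]: |x_j|\le r\text{ for all }j\ge i\}$, with $i_r^+(x)=d+1$ if $|x_d|>r$. A function $f:B_R(0)\to\mathbb{R}$ is an $r$-robust zero-chain if for every $\bar x\in\mathbb{R}^d$ and every $x\in B_r(\bar x)\cap B_R(0)$, $f(x)=f(x_1,\ldots,x_{i_r^+(\bar x)},0,\ldots,0)$ (interpreted as $f(x)$ when $i_r^+(\bar x)=d+1$). *)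

(* Defs.v *)
(* classical reals. Vectors of R^d are represented as
   functions nat -> R, with coordinates indexed 1..d (as in the paper);
   values at indices 0 and > d are ignored by every definition below. *)
From Stdlib Require Import Reals Lra Lia.
Open Scope R_scope.

Fixpoint sum1 (n : nat) (g : nat -> R) : R :=
  match n with
  | O => 0
  | S k => sum1 k g + g (S k)
  end.

Definition norm2 (d : nat) (x : nat -> R) : R :=
  sqrt (sum1 d (fun j => x j ^ 2)).

Definition vsub (x y : nat -> R) : nat -> R := fun j => x j - y j.
Definition vcomb (t : R) (x y : nat -> R) : nat -> R :=
  fun j => t * x j + (1 - t) * y j.

Definition trunc (i : nat) (x : nat -> R) : nat -> R :=
  fun j => if (j <=? i)%nat then x j else 0.

Fixpoint maxupto (n : nat) (g : nat -> R) : R :=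
  match n with
  | O => g 1%nat
  | S k => Rmax (maxupto k g) (g (S k))
  end.

Definition fNr (N : nat) (r : R) (x : nat -> R) : R :=
  maxupto N (fun i => x i - 4 * r * INR i).

Definition iplus_spec (d : nat) (r : R) (x : nat -> R) (i : nat) : Prop :=
  (r < Rabs (x d) /\ i = S d) \/
  (Rabs (x d) <= r /\
   (1 <= i <= d)%nat /\
   (forall j, (i <= j <= d)%nat -> Rabs (x j) <= r) /\
   (forall i', (1 <= i' <= d)%nat ->
      (forall j, (i' <= j <= d)%nat -> Rabs (x j) <= r) -> (i <= i')%nat)).

Definition robust_zero_chain (d : nat) (r Rad : R) (f : (nat -> R) -> R) : Prop :=
  forall (xbar x : nat -> R) (i : nat),
    norm2 d (vsub x xbar) <= r -> norm2 d x <= Rad ->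
    iplus_spec d r xbar i ->
    f x = f (trunc i x).

Definition is_glb (E : R -> Prop) (m : R) : Prop :=
  (forall y, E y -> m <= y) /\ (forall b, (forall y, E y -> b <= y) -> b <= m).

(* Main.v *)
Require Import Defs.
From Stdlib Require Import Reals Lra Lia Arith.
Open Scope R_scope.

Lemma sum1_nonneg n g : (forall j, 0 <= g j) -> 0 <= sum1 n g.
Proof. intros H; induction n; simpl; [lra|]. specialize (H (S n)); lra. Qed.

Lemma sum1_ge n g k : (forall j, 0 <= g j) -> (1 <= k <= n)%nat -> g k <= sum1 n g.
Proof.
  intros H; induction n; intros Hk; [lia|]. simpl.
  destruct (Nat.eq_dec k (S n)) as [->|Hne].
  - pose proof (sum1_nonneg n g H); lra.
  - pose proof (IHn ltac:(lia)); pose proof (H (S n)); lra.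
Qed.

Lemma comp_le d x k : (1 <= k <= d)%nat -> Rabs (x k) <= norm2 d x.
Proof.
  intros Hk. unfold norm2.
  rewrite <- sqrt_Rsqr_abs. apply sqrt_le_1_alt.
  unfold Rsqr. replace (x k * x k) with ((fun j => x j ^ 2) k) by (simpl; ring).
  apply (sum1_ge d (fun j => x j ^ 2) k); auto. intros j; apply pow2_ge_0.
Qed.

Lemma max_ge N g k : (1 <= k <= N)%nat -> g k <= maxupto N g.
Proof.
  induction N; intros Hk; [lia|]. simpl.
  destruct (Nat.eq_dec k (S N)) as [->|Hne].
  - apply Rmax_r.
  - eapply Rle_trans; [apply IHN; lia| apply Rmax_l].
Qed.

Lemma max_le N g B : (1 <= N)%nat -> (forall k, (1 <= k <= N)%nat -> g k <= B) ->
  maxupto N g <= B.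
Proof.
  induction N; intros HN H; [lia|]. simpl. apply Rmax_lub.
  - destruct N as [|N]; simpl. apply H; lia. apply IHN; [lia|]. intros; apply H; lia.
  - apply H; lia.
Qed.

Lemma max_att N g : (1 <= N)%nat -> exists k, (1 <= k <= N)%nat /\ maxupto N g = g k.
Proof.
  induction N; intros HN; [lia|]. simpl.
  destruct N as [|N].
  - exists 1%nat. split; [lia|]. simpl. unfold Rmax; destruct Rle_dec; auto.
  - destruct (IHN ltac:(lia)) as [k [Hk Hm]]. rewrite Hm.
    unfold Rmax; destruct Rle_dec.
    + exists (S (S N)); split; [lia|auto].
    + exists k; split; [lia|auto].
Qed.

Lemma sum_ind n N a : sum1 n (fun j => (if (j <=? N)%nat then a else 0) ^ 2)
  = INR (Nat.min n N) * a ^ 2.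
Proof.
  induction n; cbn [sum1]; [simpl; ring|]. rewrite IHn.
  destruct (S n <=? N)%nat eqn:E.
  - apply Nat.leb_le in E. rewrite (Nat.min_l (S n) N) by lia. rewrite (Nat.min_l n N) by lia.
    rewrite S_INR. ring.
  - apply Nat.leb_gt in E. rewrite (Nat.min_r (S n) N) by lia. rewrite (Nat.min_r n N) by lia.
    ring.
Qed.

Lemma abs_bounds a b : Rabs a <= b -> -b <= a <= b.
Proof. unfold Rabs; destruct Rcase_abs; lra. Qed.

Theorem lemma14 (r Rad : R) (N d : nat)
  (hr : 0 < r) (hR : 0 < Rad) (hN : (1 <= N)%nat) (hdN : (N <= d)%nat) :
  (* (1) *)
  robust_zero_chain d r Rad (fNr N r) /\
  (* (2) *)
  (forall (x : nat -> R) (i : nat) (m : R),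
     norm2 d x <= Rad -> iplus_spec d r x i -> (i <= N)%nat ->
     is_glb (fun y => exists z, norm2 d z <= Rad /\ y = fNr N r z) m ->
     fNr N r x - m >= Rad / sqrt (INR N) - 4 * INR N * r) /\
  (* (3) convex and 1-Lipschitz on B_R(0) *)
  (forall (x y : nat -> R) (t : R),
     norm2 d x <= Rad -> norm2 d y <= Rad -> 0 <= t <= 1 ->
     fNr N r (vcomb t x y) <= t * fNr N r x + (1 - t) * fNr N r y) /\
  (forall (x y : nat -> R),
     norm2 d x <= Rad -> norm2 d y <= Rad ->
     Rabs (fNr N r x - fNr N r y) <= norm2 d (vsub x y)).
Proof.
  split; [|split; [|split]].
  - intros xbar x i Hd Hx Hi. unfold fNr.
    destruct (le_lt_dec N i) as [HNi|HiN].
    + assert (Heq : forall k, (1 <= k <= N)%nat -> trunc i x k = x k).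
      { intros k Hk. unfold trunc. replace (k <=? i)%nat with true; auto.
        symmetry; apply Nat.leb_le; lia. }
      apply Rle_antisym; apply max_le; auto; intros k Hk.
      * rewrite <- Heq by auto. apply (max_ge N (fun k => trunc i x k - 4 * r * INR k)); auto.
      * rewrite Heq by auto. apply (max_ge N (fun k => x k - 4 * r * INR k)); auto.
    + destruct Hi as [[_ Hi]|[_ [Hi1 [Hj _]]]]; [lia|].
      assert (Hb : forall j, (i <= j <= d)%nat -> -(2*r) <= x j <= 2*r).
      { intros j Hj'. apply abs_bounds.
        replace (x j) with (xbar j + vsub x xbar j) by (unfold vsub; ring).
        eapply Rle_trans; [apply Rabs_triang|].
        pose proof (Hj j Hj'). pose proof (comp_le d (vsub x xbar) j ltac:(lia)). lra. }
      assert (Hti : trunc i x i = x i).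
      { unfold trunc. rewrite (proj2 (Nat.leb_le i i)) by lia. auto. }
      pose proof (Hb i ltac:(lia)) as Hxi.
      assert (Hk1 : forall k, (i < k)%nat -> INR i + 1 <= INR k).
      { intros k Hk. rewrite <- S_INR. apply le_INR; lia. }
      apply Rle_antisym; apply max_le; auto; intros k Hk.
      * destruct (le_lt_dec k i) as [Hki|Hki].
        -- replace (x k) with (trunc i x k).
           2:{ unfold trunc. rewrite (proj2 (Nat.leb_le k i)) by lia. auto. }
           apply (max_ge N (fun k => trunc i x k - 4 * r * INR k)); auto.
        -- eapply Rle_trans; [|apply (max_ge N (fun k => trunc i x k - 4 * r * INR k) i); lia].
           simpl. rewrite Hti. pose proof (Hb k ltac:(lia)). pose proof (Hk1 k Hki). nra.
      * destruct (le_lt_dec k i) as [Hki|Hki].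
        -- replace (trunc i x k) with (x k).
           2:{ unfold trunc. rewrite (proj2 (Nat.leb_le k i)) by lia. auto. }
           apply (max_ge N (fun k => x k - 4 * r * INR k)); auto.
        -- eapply Rle_trans; [|apply (max_ge N (fun k => x k - 4 * r * INR k) i); lia].
           unfold trunc. rewrite (proj2 (Nat.leb_gt k i)) by lia.
           pose proof (Hk1 k Hki). nra.
  - intros x i m Hx Hi HiN [Hglb _].
    assert (HN0 : 0 < INR N) by (apply lt_0_INR; lia).
    set (c := Rad / sqrt (INR N)).
    assert (Hs : 0 < sqrt (INR N)) by (apply sqrt_lt_R0; lra).
    assert (Hc : 0 <= c) by (unfold c; apply Rlt_le, Rdiv_lt_0_compat; lra).
    set (z := fun j => if (j <=? N)%nat then - c else 0).
    assert (Hz : norm2 d z <= Rad).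
    { unfold norm2, z. rewrite sum_ind. rewrite Nat.min_r by lia.
      replace (INR N * (- c) ^ 2) with (Rad ^ 2).
      - rewrite sqrt_pow2; lra.
      - unfold c. replace ((- (Rad / sqrt (INR N))) ^ 2) with (Rad^2 / (sqrt (INR N))^2)
          by (field; lra).
        rewrite pow2_sqrt by lra. field; lra. }
    assert (Hm : m <= fNr N r z) by (apply Hglb; exists z; split; auto).
    assert (Hfz : fNr N r z <= - c - 4 * r).
    { unfold fNr. apply max_le; auto. intros k Hk. unfold z.
      rewrite (proj2 (Nat.leb_le k N)) by lia.
      assert (1 <= INR k) by (replace 1 with (INR 1) by reflexivity; apply le_INR; lia).
      nra. }
    destruct Hi as [[_ Hi]|[_ [Hi1 [Hj _]]]]; [lia|].
    pose proof (abs_bounds _ _ (Hj i ltac:(lia))) as Hxi.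
    assert (Hfx : x i - 4 * r * INR i <= fNr N r x)
      by (apply (max_ge N (fun k => x k - 4 * r * INR k)); lia).
    assert (INR i <= INR N) by (apply le_INR; lia).
    fold c. nra.
  - intros x y t Hx Hy Ht. unfold fNr at 1. apply max_le; auto. intros k Hk.
    pose proof (max_ge N (fun k => x k - 4 * r * INR k) k Hk).
    pose proof (max_ge N (fun k => y k - 4 * r * INR k) k Hk).
    unfold vcomb. fold (fNr N r x) (fNr N r y) in *. simpl in *. nra.
  - intros x y Hx Hy.
    destruct (max_att N (fun k => x k - 4 * r * INR k) hN) as [k1 [Hk1 E1]].
    destruct (max_att N (fun k => y k - 4 * r * INR k) hN) as [k2 [Hk2 E2]].
    pose proof (max_ge N (fun k => y k - 4 * r * INR k) k1 Hk1).
    pose proof (max_ge N (fun k => x k - 4 * r * INR k) k2 Hk2).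
    pose proof (abs_bounds _ _ (comp_le d (vsub x y) k1 ltac:(lia))).
    pose proof (abs_bounds _ _ (comp_le d (vsub x y) k2 ltac:(lia))).
    unfold vsub in *. unfold fNr. rewrite E1, E2 in *. simpl in *.
    unfold Rabs; destruct Rcase_abs; lra.
Qed.
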